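(* Let $f\in\mathbb{R}[x]$ be a polynomial of degree $n$ with $n$ simple roots, and let $g\in\mathbb{R}[x]$ have degree $<n$ and satisfy $g(\xi)>0$ at every real root $\xi$ of $f$. Then there exists a pair $(Q,q)$ with $Q\in\mathbb{R}^{n\times n}$ symmetric positive definite and $q\in\mathbb{R}[x]$ of degree $\le n-2$ such that $g=\mathbf{x}^TQ\,\mathbf{x}+q\,f$. In particular $Q$ lies in the interior of the cone of $n\times n$ real symmetric positive semidefinite matrices.
   Context: $\mathbf{x}=[1,x,\dots,x^{n-1}]^T$ denotes the column vector of monomials of degree $<n$. *)

(* Defs.v *)
From Stdlib Require Import Rdefinitions.
From HB Require Import structures.
From mathcomp Require Import all_boot all_order all_algebra.
From mathcomp Require Import Rstruct.
From mathcomp.real_closed Require Import complex.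
Set Implicit Arguments. Unset Strict Implicit. Unset Printing Implicit Defensive.
Import Order.TTheory GRing.Theory Num.Theory.
Local Open Scope ring_scope.

Definition has_n_simple_roots (n : nat) (f : {poly R}) : Prop :=
  exists s : seq (complex R),
    [/\ uniq s, size s = n &
        forall z, z \in s -> root (map_poly (real_complex R) f) z].

Definition monvec (n : nat) : 'cV[{poly R}]_n := \col_(i < n) 'X^i.

Definition quadform_poly (n : nat) (Q : 'M[R]_n) : {poly R} :=
  ((monvec n)^T *m map_mx polyC Q *m monvec n) 0 0.

Definition symmetric_mx (n : nat) (Q : 'M[R]_n) : Prop := Q^T = Q.

Definition posdef_mx (n : nat) (Q : 'M[R]_n) : Prop :=
  symmetric_mx Q /\
  forall v : 'cV[R]_n, v != 0 -> 0 < (v^T *m Q *m v) 0 0.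

(* Main.v *)
Require Import Defs.
From Stdlib Require Import Rdefinitions.
From HB Require Import structures.
From mathcomp Require Import all_boot all_order all_algebra.
From mathcomp Require Import Rstruct.
From mathcomp.real_closed Require Import complex.
From mathcomp Require Import ring lra zify.
From Stdlib Require Import Lia.
Import Order.TTheory GRing.Theory Num.Theory.
Local Open Scope ring_scope.
Local Notation C := (complex R).
Local Notation rc := (real_complex R).
Local Notation pC p := (map_poly rc p).
Local Notation ReC := complex.Re.
Local Notation ImC := complex.Im.

Lemma pC_conj (p : {poly R}) (z : C) : conjc (pC p).[z] = (pC p).[conjc z].
Proof.
have E : pC p = map_poly conjc (pC p).
  by rewrite -map_poly_comp; apply: (eq_map_poly _ p) => x /=; rewrite oppr0.
by rewrite -horner_map /= -E.
Qed.

Lemma conjc_rc (x : R) : conjc (rc x) = rc x.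
Proof. by rewrite /= oppr0. Qed.

Lemma quadform_eval n (Q : 'M[R]_n) (w : C) :
  (pC (quadform_poly Q)).[w] = \sum_a \sum_b rc (Q a b) * w ^+ a * w ^+ b.
Proof.
rewrite /quadform_poly !mxE rmorph_sum horner_sum exchange_big /=.
apply: eq_bigr => b _; rewrite !mxE rmorphM rmorph_sum /= hornerM horner_sum mulr_suml.
apply: eq_bigr => a _; rewrite !mxE rmorphM /= hornerM !map_polyXn map_polyC /= !hornerXn hornerC.
by rewrite [w ^+ a * _]mulrC.
Qed.

Lemma Xexpand n (W : 'M[C]_n) (c t u : 'I_n -> C) :
  \sum_a \sum_b (\sum_k (c k * W k a * W k b + t k * W k a * conjc (W k b))) * u a * u b
  = \sum_k (c k * (\sum_a W k a * u a) * (\sum_b W k b * u b)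
           + t k * (\sum_a W k a * u a) * (\sum_b conjc (W k b) * u b)).
Proof.
under eq_bigr => a _ do (under eq_bigr => b _ do rewrite !mulr_suml; rewrite exchange_big).
rewrite exchange_big; apply: eq_bigr => k _.
rewrite -!mulrA !mulr_suml !mulr_sumr -big_split /=; apply: eq_bigr => a _.
rewrite !mulr_sumr -big_split; apply: eq_bigr => b _ /=.
ring.
Qed.

Lemma ReD (x y : C) : ReC (x + y) = ReC x + ReC y.
Proof. by case: x => a b; case: y => c d. Qed.

Lemma Re_sum I (r : seq I) (F : I -> C) : ReC (\sum_(i <- r) F i) = \sum_(i <- r) ReC (F i).
Proof. by elim: r => [|x r IH]; rewrite ?big_nil ?big_cons ?ReD ?IH. Qed.

Lemma symterm (c w1 w2 : C) (r : R) :
  ReC (c * w1 * w2 + rc r * w1 * conjc w2) = ReC (c * w2 * w1 + rc r * w2 * conjc w1).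
Proof. case: c => a b; case: w1 => p q; case: w2 => p' q' /=. ring. Qed.

Lemma ReForm n (X : 'I_n -> 'I_n -> C) (u : 'I_n -> C) :
  \sum_a \sum_b rc (ReC (X a b)) * u a * u b =
  (\sum_a \sum_b X a b * u a * u b
   + conjc (\sum_a \sum_b X a b * conjc (u a) * conjc (u b))) / 2%:R.
Proof.
rewrite rmorph_sum mulrDl !mulr_suml -big_split; apply: eq_bigr => a _ /=.
rewrite rmorph_sum !mulr_suml -big_split; apply: eq_bigr => b _ /=.
rewrite ReJ_add !rmorphM /= !conjcK; field.
by [].
Qed.

Lemma pos_real (g t : R) (y : C) : 0 < g -> t = 2 + g ^+ 2 ->
  0 <= ReC ((rc g - rc t) * y * y + rc t * y * conjc y) /\
  (y != 0 -> 0 < ReC ((rc g - rc t) * y * y + rc t * y * conjc y)).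
Proof.
move=> g0 ->; case: y => p q /=.
split; first by nra.
move=> yn0.
have : (0 < p ^+ 2 + q ^+ 2).
  case: (ltrgt0P p) => hp; try nra. rewrite hp in yn0 *. 
  case: (ltrgt0P q) => hq; try nra. by rewrite hq eqxx in yn0.
nra.
Qed.

Lemma pos_cplx (c y : C) :
  0 <= ReC (c * y * y + rc (2 + ReC c ^+ 2 + ImC c ^+ 2) * y * conjc y) /\
  (y != 0 -> 0 < ReC (c * y * y + rc (2 + ReC c ^+ 2 + ImC c ^+ 2) * y * conjc y)).
Proof.
case: c => u1 u2; case: y => p q /=.
have h1 := @sqr_ge0 R (u1* p - u2* q + p); have h2 := @sqr_ge0 R (u1* q + u2* p - q).
have h3 := @sqr_ge0 R (u1* p); have h4 := @sqr_ge0 R (u1* q); have h5 := @sqr_ge0 R (u2* p); have h6 := @sqr_ge0 R (u2* q).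
split; first by nra.
move=> yn0.
have : (0 < p ^+ 2 + q ^+ 2).
  case: (ltrgt0P p) => hp; try nra. rewrite hp in yn0 *.
  case: (ltrgt0P q) => hq; try nra. by rewrite hq eqxx in yn0.
nra.
Qed.

Theorem mainTheorem3 (n : nat) (f g : {poly R}) :
  size f = n.+1 ->
  has_n_simple_roots n f ->
  (size g <= n)%N ->
  (forall xi : R, root f xi -> 0 < g.[xi]) ->
  exists (Q : 'M[R]_n) (q : {poly R}),
    [/\ posdef_mx Q, (size q <= n.-1)%N & g = quadform_poly Q + q * f].
Proof.
move=> szf [s [us ss rs]] szg gpos.
pose P := \prod_(a <- s) ('X - a%:P).
have fC0 : size (pC f) = n.+1 by rewrite size_map_poly.
have Pdvd : P %| pC f.
  by apply: uniq_roots_dvdp; [apply/allP | rewrite uniq_rootsE].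
have PeqF : P %= pC f by rewrite -dvdp_size_eqp // size_prod_XsubC ss fC0.
have rootE w : root (pC f) w = (w \in s) by rewrite -(eqp_root PeqF) root_prod_XsubC.
pose z (j : 'I_n) : C := s`_j.
have zs j : z j \in s by rewrite /z mem_nth // ss.
have zroot j : root (pC f) (conjc (z j)).
  by rewrite /root -pC_conj (rootP (rs _ (zs j))) rmorph0.
have mP j : (index (conjc (z j)) s < n)%N by rewrite -ss index_mem -rootE.
pose m j := Ordinal (mP j).
have zm j : z (m j) = conjc (z j) by rewrite /z /= nth_index // -rootE.
pose V : 'M[C]_n := Vandermonde n (\row_j z j).
have Vu : V \in unitmx.
  rewrite unitmxE det_Vandermonde unitfE; apply/prodf_neq0 => i _.
  apply/prodf_neq0 => j ij; rewrite !mxE subr_eq0 /z nth_uniq ?ss //.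
  by rewrite eq_sym neq_ltn ij.
pose W := invmx V.
have key j k : \sum_a W k a * z j ^+ a = (k == j)%:R.
  have := congr1 (fun M : 'M[C]_n => M k j) (mulVmx Vu); rewrite !mxE => <-.
  by apply: eq_bigr => a _; rewrite !mxE.
have zmkey j k : \sum_b conjc (W k b) * z j ^+ b = (k == m j)%:R.
  rewrite (_ : \sum_b _ = conjc (\sum_b W k b * z (m j) ^+ b)); first by rewrite key conjc_nat.
  rewrite rmorph_sum; apply: eq_bigr => b _; by rewrite rmorphM rmorphXn /= zm conjcK.
pose gz j := (pC g).[z j].
have gzm j : conjc (gz (m j)) = gz j by rewrite /gz zm -pC_conj conjcK.
pose tr j : R := 2 + ReC (gz j) ^+ 2 + ImC (gz j) ^+ 2.
pose c j := gz j - rc (tr j) * (m j == j)%:R.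
pose X a b := \sum_k (c k * W k a * W k b + rc (tr k) * W k a * conjc (W k b)).
pose Q : 'M[R]_n := \matrix_(a, b) ReC (X a b).
have Gz j : \sum_a \sum_b X a b * z j ^+ a * z j ^+ b = c j + rc (tr j) * (j == m j)%:R.
  rewrite /X (@Xexpand n W c (fun k => rc (tr k)) (fun a => z j ^+ a)) /=.
  rewrite (bigD1 j) //= [Y in _ + Y = _]big1 => [|k kj]; first by rewrite !key zmkey eqxx /= !mulr1 addr0.
  by rewrite !key (negbTE kj) !mulr0 mul0r add0r.
have heval j : (pC (quadform_poly Q)).[z j] = gz j.
  rewrite quadform_eval.
  under eq_bigr => a _ do under eq_bigr => b _ do rewrite mxE.
  rewrite (@ReForm n X (fun a => z j ^+ a)) /=.
  have E : \sum_a \sum_b X a b * conjc (z j ^+ a) * conjc (z j ^+ b)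
          = \sum_a \sum_b X a b * z (m j) ^+ a * z (m j) ^+ b.
    by apply: eq_bigr => a _; apply: eq_bigr => b _; rewrite !rmorphXn /= zm.
  rewrite E.
  rewrite Gz Gz /c [j == m j]eq_sym [m j == m (m j)]eq_sym !subrK gzm.
  by field.
have fn0 : f != 0 by rewrite -size_poly_eq0 szf.
pose h := quadform_poly Q.
have hdvd : f %| g - h.
  rewrite -(dvdp_map rc) -(eqp_dvdl _ PeqF).
  apply: uniq_roots_dvdp; last by rewrite uniq_rootsE.
  apply/allP => w ws.
  have wi : (index w s < n)%N by rewrite -ss index_mem.
  have -> : w = z (Ordinal wi) by rewrite /z /= nth_index.
  by rewrite /root rmorphB /= hornerD hornerN heval subr_eq0.
have szh : (size h <= (n + n).-1)%N.
  rewrite /h /quadform_poly !mxE.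
  apply: (big_ind (fun p : {poly R} => size p <= (n + n).-1)%N) => [|x y Hx Hy|b _].
  - by rewrite size_poly0.
  - by rewrite (leq_trans (size_add _ _)) // geq_max Hx Hy.
  rewrite !mxE (leq_trans (size_polyMleq _ _)) // size_polyXn.
  set S := (\sum_(a < n) _).
  have : (size S <= n)%N.
    apply: (big_ind (fun p : {poly R} => size p <= n)%N) => [|x y Hx Hy|a _].
    - by rewrite size_poly0.
    - by rewrite (leq_trans (size_add _ _)) // geq_max Hx Hy.
    rewrite !mxE (leq_trans (size_polyMleq _ _)) // size_polyXn.
    apply: (leq_trans _ (ltn_ord a)); by rewrite addSn /= -addn1 leq_add2l size_polyC_leq1.
  have := ltn_ord b; lia.
pose q := (g - h) %/ f.
have gE : g = h + q * f by rewrite /q (divpK hdvd) addrC subrK.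
exists Q, q; split => //; last first.
  have : (size (q * f)%R <= (n + n).-1)%N.
    rewrite /q (divpK hdvd) (leq_trans (size_add _ _)) // size_opp geq_max szh.
    by rewrite (leq_trans szg) //; lia.
  have [->|qn0] := eqVneq q 0; first by rewrite size_poly0.
  rewrite size_mul // szf; move: (size q) => k; lia.
split.
  apply/matrixP => a b; rewrite !mxE /X !Re_sum; apply: eq_bigr => k _.
  exact: symterm.
move=> v vn0.
pose u a := rc (v a 0).
pose y k := \sum_a W k a * u a.
have E1 : rc ((v^T *m Q *m v) 0 0) = \sum_a \sum_b rc (ReC (X a b)) * u a * u b.
  rewrite mxE rmorph_sum [RHS]exchange_big; apply: eq_bigr => b _.
  rewrite mxE rmorphM rmorph_sum mulr_suml; apply: eq_bigr => a _.
  rewrite !mxE !rmorphM /u /=; ring.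
have E2 : (v^T *m Q *m v) 0 0 = ReC (\sum_a \sum_b X a b * u a * u b).
  apply: complexI; rewrite E1 (@ReForm n X u) ReJ_add.
  congr ((_ + conjc _) / _); apply: eq_bigr => a _; apply: eq_bigr => b _.
  by rewrite /u !conjc_real.
pose T k := ReC (c k * y k * y k + rc (tr k) * y k * conjc (y k)).
have E3 : (v^T *m Q *m v) 0 0 = \sum_k T k.
  rewrite E2 /X (@Xexpand n W c (fun k => rc (tr k)) u) Re_sum.
  apply: eq_bigr => k _; rewrite /T /y; congr (ReC (_ + _ * _)).
  rewrite rmorph_sum; apply: eq_bigr => b _; rewrite rmorphM; congr (_ * _); exact: (esym (conjc_rc _)).
have Tpos k : 0 <= T k /\ (y k != 0 -> 0 < T k).
  have [mk|mk] := eqVneq (m k) k.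
    have zc : z k = conjc (z k) by rewrite -zm mk.
    have zr : z k = rc (ReC (z k)).
      move: zc; case: (z k) => a b [] /= hb.
      by congr Complex; lra.
    set a := ReC (z k) in zr.
    have fa : root f a.
      have := rs _ (zs k); rewrite zr /root horner_map /= => /eqP H.
      apply/eqP; apply: complexI; by rewrite H rmorph0.
    have gk : gz k = rc (g.[a]) by rewrite /gz zr horner_map.
    have tk : tr k = 2 + g.[a] ^+ 2 by rewrite /tr gk /=; ring.
    have -> : T k = ReC ((rc (g.[a]) - rc (tr k)) * y k * y k + rc (tr k) * y k * conjc (y k)).
      by rewrite /T /c mk eqxx mulr1n mulr1 gk.
    exact: pos_real (gpos _ fa) tk.
  have -> : T k = ReC (gz k * y k * y k + rc (tr k) * y k * conjc (y k)).
    by rewrite /T /c (negbTE mk) mulr0 subr0.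
  exact: pos_cplx.
rewrite E3.
have [k0 yk0] : exists k, y k != 0.
  case: (boolP [exists k, y k != 0]) => [/existsP //|/existsPn H].
  have Wv : W *m map_mx rc v = 0.
    apply/matrixP => k i; rewrite (ord1 i) !mxE.
    transitivity (y k); last exact/eqP/negbNE.
    by apply: eq_bigr => a _; rewrite mxE.
  have : map_mx rc v = 0.
    by rewrite -[map_mx rc v]mul1mx -(mulmxV Vu) -mulmxA Wv mulmx0.
  by move/eqP; rewrite map_mx_eq0 (negbTE vn0).
rewrite (bigD1 k0) //=; apply: (lt_le_trans (proj2 (Tpos k0) yk0)).
rewrite lerDl; apply: sumr_ge0 => k _; exact: (proj1 (Tpos k)).
Qed.
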